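(* For all $\Delta,\Delta',D,D'\in\mathcal D_n^+$, $$d_s(\Delta+D,\Delta'+D')\le\max\big(d_s(\Delta,\Delta'),d_s(D,D')\big).$$
   Context: $\mathcal D_n^+$ is the set of $n\times n$ diagonal matrices with positive diagonal entries, and $d_s(\Delta,\Delta')=\max_i\frac{|\Delta_i-\Delta'_i|}{\sqrt{\Delta_i\Delta'_i}}$. *)

(* Defs.v *)
From mathcomp Require Import all_boot all_order all_algebra.
Set Implicit Arguments. Unset Strict Implicit. Unset Printing Implicit Defensive.
Import Order.TTheory GRing.Theory Num.Theory.
Local Open Scope ring_scope.

Definition posdiag (R : rcfType) (n : nat) (A : 'M[R]_n) : Prop :=
  is_diag_mx A /\ (forall i : 'I_n, 0 < A i i).

Definition d_s (R : rcfType) (n : nat) (A B : 'M[R]_n) : R :=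
  \big[Num.max/0]_(i < n) (`|A i i - B i i| / Num.sqrt (A i i * B i i)).

(* Main.v *)
Require Import Defs.
From mathcomp Require Import all_boot all_order all_algebra.
From mathcomp Require Import ring lra.
Import Order.TTheory GRing.Theory Num.Theory.
Local Open Scope ring_scope.

Lemma key (R : rcfType) (a a' b b' : R) :
  0 < a -> 0 < a' -> 0 < b -> 0 < b' ->
  `|(a + b) - (a' + b')| / Num.sqrt ((a + b) * (a' + b')) <=
  Num.max (`|a - a'| / Num.sqrt (a * a')) (`|b - b'| / Num.sqrt (b * b')).
Proof.
move=> ha ha' hb hb'.
set M := Num.max _ _.
have hM1 : `|a - a'| / Num.sqrt (a * a') <= M by rewrite le_max lexx.
have hM2 : `|b - b'| / Num.sqrt (b * b') <= M by rewrite le_max lexx orbT.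
have hM0 : 0 <= M by apply: le_trans hM1; rewrite divr_ge0 ?sqrtr_ge0.
have sa : 0 < Num.sqrt a by rewrite sqrtr_gt0.
have sa' : 0 < Num.sqrt a' by rewrite sqrtr_gt0.
have sb : 0 < Num.sqrt b by rewrite sqrtr_gt0.
have sb' : 0 < Num.sqrt b' by rewrite sqrtr_gt0.
have ea := sqr_sqrtr (ltW ha). have ea' := sqr_sqrtr (ltW ha').
have eb := sqr_sqrtr (ltW hb). have eb' := sqr_sqrtr (ltW hb').
rewrite sqrtrM ?(ltW ha) // in hM1.
rewrite sqrtrM ?(ltW hb) // in hM2.
rewrite ler_pdivrMr ?mulr_gt0 // in hM1.
rewrite ler_pdivrMr ?mulr_gt0 // in hM2.
have hS : 0 < (a + b) * (a' + b') by rewrite mulr_gt0 ?addr_gt0.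
rewrite ler_pdivrMr ?sqrtr_gt0 //.
have eS := sqr_sqrtr (ltW hS).
have sS : 0 <= Num.sqrt ((a + b) * (a' + b')) by rewrite sqrtr_ge0.
set s := Num.sqrt ((a + b) * (a' + b')) in eS sS *.
set x := Num.sqrt a in sa ea hM1. set x' := Num.sqrt a' in sa' ea' hM1.
set y := Num.sqrt b in sb eb hM2. set y' := Num.sqrt b' in sb' eb' hM2.
have hC : x * x' + y * y' <= s.
  rewrite -ea -ea' -eb -eb' in eS.
  have h2 : (x * x' + y * y') ^+ 2 <= s ^+ 2.
    rewrite eS; have := sqr_ge0 (x * y' - y * x'); nra.
  have hu : 0 <= x * x' + y * y' by nra.
  by rewrite -(ler_pXn2r (_ : (0 < 2)%N)) ?nnegrE.
apply: le_trans (_ : M * (x * x') + M * (y * y') <= _); last first.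
  by rewrite -mulrDr ler_wpM2l.
rewrite (_ : a + b - (a' + b') = (a - a') + (b - b')); last by ring.
apply: le_trans (ler_normD _ _) _.
by apply: lerD.
Qed.

Theorem mainTheorem5 (R : rcfType) (n : nat) (Dl Dl' D D' : 'M[R]_n) :
  posdiag Dl -> posdiag Dl' -> posdiag D -> posdiag D' ->
  d_s (Dl + D) (Dl' + D') <= Num.max (d_s Dl Dl') (d_s D D').
Proof.
move=> [_ h1] [_ h2] [_ h3] [_ h4].
have ge0 : forall (A B : 'M[R]_n), 0 <= d_s A B.
  move=> A B; rewrite /d_s; apply: le_trans (_ : 0 <= 0) _ => //.
  elim/big_ind: _ => //; first by move=> x y hx hy; rewrite le_max hx.
  by move=> j _; rewrite divr_ge0 ?sqrtr_ge0.
rewrite /d_s; apply: bigmax_le.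
  by rewrite le_max; apply/orP; left; apply: ge0.
move=> i _; rewrite !mxE.
have K := @key R _ _ _ _ (h1 i) (h2 i) (h3 i) (h4 i).
apply: le_trans K _.
rewrite ge_max !le_max; apply/andP; split; apply/orP; [left|right].
  exact: (le_bigmax _ (fun i : 'I_n => `|Dl i i - Dl' i i| / Num.sqrt (Dl i i * Dl' i i))).
exact: (le_bigmax _ (fun i : 'I_n => `|D i i - D' i i| / Num.sqrt (D i i * D' i i))).
Qed.
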